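(* Let the contents be $\mathcal{C}=\{1,\dots,C\}$ with normalized popularities $\hat\nu_1\ge\hat\nu_2\ge\dots\ge\hat\nu_C>0$, $\sum_c\hat\nu_c=1$, let $\rho>0$, $\rho_c=\rho\hat\nu_c$, and let $M\ge1$ be an integer. Consider the linear program (OPT 2) $$\max_{\tilde{\mathbf m},\boldsymbol\lambda,\mathbf x}\ \sum_{c\in\mathcal{C}}(\rho_c\tilde m_c+x_c)$$ subject to: for all $c$, $0\le\tilde m_c\le1$, $0\le\lambda_c\le\tilde m_c$, $0\le x_c\le\lambda_c$, $x_c\le\rho_c(1-\tilde m_c)$; and $\sum_c\tilde m_c=M$, $\sum_c\lambda_c\le1$. Let $c^*$ be the index such that $\sum_{c=M}^{c^*}\frac{\rho_c}{1+\rho_c}\le1$ but $\sum_{c=M}^{c^*+1}\frac{\rho_c}{1+\rho_c}>1$. Then the following is an optimal solution of OPT 2: (i) for $1\le c\le M-1$: $\tilde m_c=1$, $\lambda_c=x_c=0$; (ii) for $M\le c\le c^*$: $\tilde m_c=\lambda_c=x_c=\rho_c/(1+\rho_c)$; (iii) for $c=c^*+1$: $\tilde m_c=\lambda_c=x_c=1-\sum_{c'=M}^{c^*}\tilde m_{c'}$; (iv) for $c^*+2\le c\le C$: $\tilde m_c=\lambda_c=x_c=0$.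
   Context: In the pure peer-to-peer setting, $\tilde m_c$ is the fraction of boxes caching content $c$, $\lambda_c$ the fraction of total upload bandwidth devoted to content $c$, and $\rho_c$ the (normalized) traffic load of requests for $c$. *)

(* Defs.v *)
From HB Require Import structures.
From mathcomp Require Import all_boot all_order all_algebra.
Set Implicit Arguments. Unset Strict Implicit. Unset Printing Implicit Defensive.
Import Order.TTheory GRing.Theory Num.Theory.
Local Open Scope ring_scope.

Definition rhoc {R : realFieldType} (rho : R) (nu : nat -> R) (c : nat) : R :=
  rho * nu c.

Definition opt2_feasible {R : realFieldType} (C : nat) (rho : R) (nu : nat -> R)
  (M : nat) (m lam x : nat -> R) : Prop :=
  (forall c : nat, (1 <= c <= C)%N ->
     [/\ 0 <= m c /\ m c <= 1, 0 <= lam c /\ lam c <= m c,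
         0 <= x c, x c <= lam c & x c <= rhoc rho nu c * (1 - m c)])
  /\ \sum_(1 <= c < C.+1) m c = M%:R
  /\ \sum_(1 <= c < C.+1) lam c <= 1.

Definition opt2_obj {R : realFieldType} (C : nat) (rho : R) (nu : nat -> R)
  (m x : nat -> R) : R :=
  \sum_(1 <= c < C.+1) (rhoc rho nu c * m c + x c).

Definition opt2_optimal {R : realFieldType} (C : nat) (rho : R) (nu : nat -> R)
  (M : nat) (m lam x : nat -> R) : Prop :=
  opt2_feasible C rho nu M m lam x /\
  forall m' lam' x' : nat -> R, opt2_feasible C rho nu M m' lam' x' ->
    opt2_obj C rho nu m' x' <= opt2_obj C rho nu m x.

Definition sol_m {R : realFieldType} (rho : R) (nu : nat -> R) (M cs : nat)
  (c : nat) : R :=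
  if (c < M)%N then 1
  else if (c <= cs)%N then rhoc rho nu c / (1 + rhoc rho nu c)
  else if c == cs.+1 then
    1 - \sum_(M <= c' < cs.+1) rhoc rho nu c' / (1 + rhoc rho nu c')
  else 0.

(* lambda_c = x_c of the proposed solution. *)
Definition sol_lx {R : realFieldType} (rho : R) (nu : nat -> R) (M cs : nat)
  (c : nat) : R :=
  if (c < M)%N then 0 else sol_m rho nu M cs c.

(* Main.v *)
Require Import Defs.
From HB Require Import structures.
From mathcomp Require Import all_boot all_order all_algebra.
From mathcomp Require Import ring lra zify.
Import Order.TTheory GRing.Theory Num.Theory.
Local Open Scope ring_scope.
Lemma LA (R : realFieldType) (r r' mu m l x : R) :
  0 <= mu -> mu <= 1 -> 1 + r' <= mu * (1 + r) -> m <= 1 -> x <= l -> x <= r * (1 - m) ->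
  r * m + x <= r - (1 + r' - mu) + mu * l + (1 + r' - mu) * m.
Proof.
move=> h1 h2 h3 h4 h5 h6.
have e1 : 0 <= (1 - mu) * (r * (1 - m) - x) by apply: mulr_ge0; rewrite ?subr_ge0 //; lra.
have e2 : 0 <= mu * (l - x) by apply: mulr_ge0; rewrite ?subr_ge0 //; lra.
have e3 : 0 <= (mu * (1 + r) - (1 + r')) * (1 - m) by apply: mulr_ge0; rewrite ?subr_ge0 //; lra.
nra.
Qed.
Lemma LB (R : realFieldType) (r r' mu m l x : R) :
  0 < r -> 0 <= r' -> r' <= r -> mu * (1 + r) <= 1 + r' -> l <= m -> x <= l -> x <= r * (1 - m) ->
  r * m + x <= r * (r - r') / (1 + r) + mu * l + (1 + r' - mu) * m.
Proof.
move=> h1 h0 h2 h3 h4 h5 h6.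
have e1 : 0 <= (1 + r') * (l - x) by apply: mulr_ge0; rewrite ?subr_ge0 //; lra.
have e2 : 0 <= (r - r') * (r * (1 - m) - x) by apply: mulr_ge0; rewrite ?subr_ge0 //; lra.
have e3 : 0 <= ((1 + r') - mu * (1 + r)) * (m - l) by apply: mulr_ge0; rewrite ?subr_ge0 //; lra.
have hp : 0 < 1 + r by lra.
set q := r * (r - r') / (1 + r).
have hq : q * (1 + r) = r * (r - r') by rewrite /q mulfVK // gt_eqF.
suff : (r * m + x - mu * l - (1 + r' - mu) * m) * (1 + r) <= q * (1 + r).
  rewrite ler_pM2r //; lra.
rewrite hq; nra.
Qed.
Lemma LC (R : realFieldType) (r r' mu m l x : R) :
  0 <= mu -> mu <= 1 -> r <= r' -> 0 <= m -> l <= m -> x <= l ->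
  r * m + x <= mu * l + (1 + r' - mu) * m.
Proof.
move=> h1 h2 h3 h4 h5 h6.
have e1 : 0 <= (r' - r) * m by apply: mulr_ge0; rewrite ?subr_ge0 //; lra.
have e2 : 0 <= (1 - mu) * (m - l) by apply: mulr_ge0; rewrite ?subr_ge0 //; lra.
nra.
Qed.

Lemma split_sum (R : realFieldType) (C M cs : nat) (f : nat -> R) :
  (1 <= M)%N -> (M <= cs)%N -> (cs < C)%N ->
  \sum_(1 <= c < C.+1) f c = \sum_(1 <= c < M) f c + \sum_(M <= c < cs.+1) f c
     + f cs.+1 + \sum_(cs.+2 <= c < C.+1) f c.
Proof.
move=> h1 h2 h3.
rewrite (@big_cat_nat _ _ _ M 1 C.+1) /=; [|lia|lia].
rewrite (@big_cat_nat _ _ _ cs.+1 M C.+1) /=; [|lia|lia].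
rewrite (@big_cat_nat _ _ _ cs.+2 cs.+1 C.+1) /=; [|lia|lia].
by rewrite big_nat1 !addrA.
Qed.

Ltac nlia R := repeat (match goal with H : ?T |- _ => lazymatch T with context [R] => clear H end end); lia.

Theorem theorem2 (R : realFieldType) (C : nat) (nu : nat -> R) (rho : R)
  (M cs : nat)
  (hnu_mono : forall c : nat, (1 <= c)%N -> (c < C)%N -> nu c.+1 <= nu c)
  (hnu_pos : forall c : nat, (1 <= c <= C)%N -> 0 < nu c)
  (hnu_sum : \sum_(1 <= c < C.+1) nu c = 1)
  (hrho : 0 < rho)
  (hM : (1 <= M)%N)
  (hcs : (cs < C)%N)
  (hcs_le : \sum_(M <= c < cs.+1) rhoc rho nu c / (1 + rhoc rho nu c) <= 1)
  (hcs_gt : 1 < \sum_(M <= c < cs.+2) rhoc rho nu c / (1 + rhoc rho nu c)) :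
  opt2_optimal C rho nu M (sol_m rho nu M cs) (sol_lx rho nu M cs)
    (sol_lx rho nu M cs).
Proof.
have hrpos : forall c, (1 <= c <= C)%N -> 0 < rhoc rho nu c.
  by move=> c hc; rewrite /rhoc mulr_gt0 // hnu_pos.
have hrmono : forall c c', (1 <= c)%N -> (c <= c')%N -> (c' <= C)%N ->
    rhoc rho nu c' <= rhoc rho nu c.
  move=> c; elim=> [|c' IH] h1 h2 h3; first by nlia R.
  case: (leqP c c') => hcc.
    apply: le_trans (IH h1 hcc _); last by nlia R.
    by rewrite /rhoc ler_pM2l // hnu_mono //; nlia R.
  by have -> : c = c'.+1 by nlia R.
have hp1 : forall c, (1 <= c <= C)%N -> rhoc rho nu c / (1 + rhoc rho nu c) < 1.
  move=> c hc; have := hrpos c hc => h.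
  by rewrite ltr_pdivrMr; lra.
have hp0 : forall c, (1 <= c <= C)%N -> 0 <= rhoc rho nu c / (1 + rhoc rho nu c).
  move=> c hc; have := hrpos c hc => h.
  by rewrite divr_ge0 //; lra.
have hMcs : (M <= cs)%N.
  case: (leqP M cs) => // hlt; exfalso.
  case: (leqP cs.+2 M) => h2.
    by move: hcs_gt; rewrite big_geq //; lra.
  have eM : M = cs.+1 by nlia R.
  move: hcs_gt; rewrite eM big_nat1 => h.
  have := hp1 cs.+1 (ltac:(nlia R)); lra.
set S := \sum_(M <= c < cs.+1) rhoc rho nu c / (1 + rhoc rho nu c).
have hS1 : S <= 1 := hcs_le.
have hS0 : 0 <= S.
  rewrite /S big_nat_cond sumr_ge0 // => c /andP[/andP[h1 h2] _]; apply: hp0; nlia R.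
have hSgt : 1 - S < rhoc rho nu cs.+1 / (1 + rhoc rho nu cs.+1).
  move: hcs_gt; rewrite big_nat_recr /=; last nlia R. rewrite -/S; lra.
have sm1 : forall c, (c < M)%N -> sol_m rho nu M cs c = 1 by move=> c h; rewrite /sol_m h.
have sl1 : forall c, (c < M)%N -> sol_lx rho nu M cs c = 0 by move=> c h; rewrite /sol_lx h.
have sm2 : forall c, (M <= c <= cs)%N ->
  sol_m rho nu M cs c = rhoc rho nu c / (1 + rhoc rho nu c).
  by move=> c h; rewrite /sol_m ifF ?ifT //; nlia R.
have sl2 : forall c, (M <= c <= cs)%N ->
  sol_lx rho nu M cs c = rhoc rho nu c / (1 + rhoc rho nu c).
  by move=> c h; rewrite /sol_lx ifF ?sm2 //; nlia R.
have sm3 : sol_m rho nu M cs cs.+1 = 1 - S.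
  rewrite /sol_m ifF; last nlia R.
  by rewrite ifF ?eqxx //; nlia R.
have sl3 : sol_lx rho nu M cs cs.+1 = 1 - S.
  by rewrite /sol_lx ifF ?sm3 //; nlia R.
have sm4 : forall c, (cs.+1 < c)%N -> sol_m rho nu M cs c = 0.
  move=> c h; rewrite /sol_m ifF; last nlia R.
  rewrite ifF; last nlia R.
  by rewrite ifF //; nlia R.
have sl4 : forall c, (cs.+1 < c)%N -> sol_lx rho nu M cs c = 0.
  by move=> c h; rewrite /sol_lx ifF ?sm4 //; nlia R.
have Hmsum : \sum_(1 <= c < C.+1) sol_m rho nu M cs c = M%:R.
  rewrite (@split_sum R C M cs _ hM hMcs hcs) sm3.
  rewrite [X in X + _ + _ + _]big_nat_cond (eq_bigr (fun _ => 1)); last first.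
    by move=> c /andP[/andP[_ h] _]; rewrite sm1.
  rewrite -big_nat_cond sumr_const_nat.
  rewrite [X in _ + X + _ + _]big_nat_cond
    (eq_bigr (fun c => rhoc rho nu c / (1 + rhoc rho nu c))); last first.
    by move=> c /andP[/andP[h1 h2] _]; rewrite sm2 //; nlia R.
  rewrite -big_nat_cond -/S.
  rewrite [X in _ + X]big_nat_cond big1 ?addr0; last first.
    by move=> c /andP[/andP[h1 h2] _]; rewrite sm4 //; nlia R.
  rewrite -[in RHS](subnK hM) natrD; lra.
have Hlsum : \sum_(1 <= c < C.+1) sol_lx rho nu M cs c = 1.
  rewrite (@split_sum R C M cs _ hM hMcs hcs) sl3.
  rewrite [X in X + _ + _ + _]big_nat_cond big1; last first.
    by move=> c /andP[/andP[_ h] _]; rewrite sl1.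
  rewrite [X in _ + X + _ + _]big_nat_cond
    (eq_bigr (fun c => rhoc rho nu c / (1 + rhoc rho nu c))); last first.
    by move=> c /andP[/andP[h1 h2] _]; rewrite sl2 //; nlia R.
  rewrite -big_nat_cond -/S.
  rewrite [X in _ + X]big_nat_cond big1 ?addr0; last first.
    by move=> c /andP[/andP[h1 h2] _]; rewrite sl4 //; nlia R.
  lra.
have Hfeas : opt2_feasible C rho nu M (sol_m rho nu M cs) (sol_lx rho nu M cs)
    (sol_lx rho nu M cs).
  split; last by rewrite Hmsum Hlsum.
  move=> c hc.
  case: (ltnP c M) => h1.
    rewrite sm1 // sl1 // subrr mulr0; split; lra.
  case: (leqP c cs) => h2.
    rewrite sm2 ?sl2; try nlia R.
    have hr := hrpos c hc; have := hp1 c hc; have := hp0 c hc.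
    have -> : rhoc rho nu c * (1 - rhoc rho nu c / (1 + rhoc rho nu c))
      = rhoc rho nu c / (1 + rhoc rho nu c).
      by field; lra.
    move=> a b; split; lra.
  case: (eqVneq c cs.+1) => h3.
    subst c; rewrite sm3 sl3.
    have hr := hrpos cs.+1 hc.
    have hx : 1 - S <= rhoc rho nu cs.+1 * (1 - (1 - S)).
      move: hSgt; rewrite ltr_pdivlMr; last lra.
      move=> h; lra.
    split; lra.
  rewrite sm4 ?sl4; try nlia R.
  have hr := hrpos c hc.
  rewrite subr0 mulr1; split; lra.
split; first exact: Hfeas.
move=> m' l' x' [Hc [Hm Hl]].
rewrite /opt2_obj.
set r' := rhoc rho nu cs.+1.
set mu := (1 + r') / (1 + rhoc rho nu M).
set T := 1 + r' - mu.
pose K c := if (c < M)%N then rhoc rho nu c - T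
  else if (c <= cs)%N then rhoc rho nu c * (rhoc rho nu c - r') / (1 + rhoc rho nu c)
  else 0.
have hrM := hrpos M (ltac:(nlia R)).
have hr' : 0 < r' by apply: hrpos; nlia R.
have hr'M : r' <= rhoc rho nu M by apply: hrmono; nlia R.
have hmu0 : 0 <= mu by rewrite divr_ge0 //; lra.
have hmu1 : mu <= 1 by rewrite ler_pdivrMr; lra.
have hmuM : mu * (1 + rhoc rho nu M) = 1 + r' by rewrite mulfVK // gt_eqF //; lra.
have E : forall m l : nat -> R,
  \sum_(1 <= c < C.+1) (K c + mu * l c + T * m c) =
  \sum_(1 <= c < C.+1) K c + mu * \sum_(1 <= c < C.+1) l c
   + T * \sum_(1 <= c < C.+1) m c.
  by move=> m l; rewrite !big_split /= !mulr_sumr.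
apply: (@le_trans _ _ (\sum_(1 <= c < C.+1) (K c + mu * l' c + T * m' c))).
  rewrite big_nat_cond [X in _ <= X]big_nat_cond.
  apply: ler_sum => c /andP[/andP[c1 cC] _].
  have hc : (1 <= c <= C)%N by rewrite c1 -ltnS.
  have [[h1 h2] [h3 h4] h5 h6 h7] := Hc c hc.
  have hr := hrpos c hc.
  rewrite /K; case: ifP => cM.
    apply: LA => //.
    have : rhoc rho nu M <= rhoc rho nu c by apply: hrmono; nlia R.
    move=> hh; rewrite -hmuM; apply: ler_wpM2l => //; lra.
  case: ifP => ccs.
    apply: LB => //; first lra.
      by apply: hrmono; nlia R.
    have : rhoc rho nu c <= rhoc rho nu M by apply: hrmono; nlia R.
    move=> hh; rewrite -hmuM; apply: ler_wpM2l => //; lra.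
  rewrite add0r; apply: LC => //.
  by apply: hrmono; nlia R.
rewrite E Hm.
apply: (@le_trans _ _ (\sum_(1 <= c < C.+1) K c + mu * 1 + T * M%:R)).
  by rewrite lerD2r lerD2l ler_wpM2l.
have -> : \sum_(1 <= c < C.+1) K c + mu * 1 + T * M%:R =
  \sum_(1 <= c < C.+1) (K c + mu * sol_lx rho nu M cs c + T * sol_m rho nu M cs c)
  by rewrite E Hlsum Hmsum.
rewrite le_eqVlt; apply/orP; left; apply/eqP.
rewrite big_nat_cond [RHS]big_nat_cond; apply: eq_bigr => c /andP[/andP[c1 cC] _].
have hc : (1 <= c <= C)%N by rewrite c1 -ltnS.
have hr := hrpos c hc.
rewrite /K; case: ifP => cM.
  rewrite sm1 // sl1 //; ring.
case: ifP => ccs.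
  rewrite sm2 ?sl2; try nlia R.
  rewrite /T; field; lra.
case: (eqVneq c cs.+1) => h3.
  subst c; rewrite sm3 sl3 /T /r'; ring.
rewrite sm4 ?sl4; try nlia R.
ring.
Qed.
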